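(* Let $T,\ell$ be positive integers, $\sigma\in(0,1]$, $w\in(0,1]$ and $\delta\in(0,1)$. Let $\mathcal{J}$ be the set of all intervals of width at most $w$ contained in $[0,1]$. For $i\in[T]$, $j\in[\ell]$ let $d_{i,j}$ be drawn from a $T\ell$-step adaptive sequence of $\sigma$-smooth distributions over $[0,1]$. Then with probability at least $1-\delta$, $$\max_{J\in\mathcal{J}}\sum_{i\in[T],\,j\in[\ell]}\mathbb{I}[d_{i,j}\in J]<\frac{T\ell w}{\sigma}\ln\!\left(\frac{2T\ell}{\delta}\right)+10\sqrt{\frac{T\ell w}{\sigma}\ln\!\left(\frac{2T\ell}{\delta}\right)\ln\!\left(\frac1\delta\right)}+10\log\!\left(\frac{10T\ell\log(2T\ell/\delta)}{\sigma\delta}\right).$$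
   Context: A distribution $\mu$ on $[0,1]$ is $\sigma$-smooth if $\mu(A)\le\mathcal{U}(A)/\sigma$ for all measurable $A$, where $\mathcal{U}$ is the uniform distribution on $[0,1]$. A $T\ell$-step adaptive sequence of $\sigma$-smooth distributions generates the $T\ell$ points one at a time, each drawn from a $\sigma$-smooth distribution chosen as a function of the previously realized points. *)

(* Defs.v *)
From HB Require Import structures.
From mathcomp Require Import all_boot all_order all_algebra.
From mathcomp Require Import all_classical all_reals all_analysis measurable_realfun.
Set Implicit Arguments. Unset Strict Implicit. Unset Printing Implicit Defensive.
Import Order.TTheory GRing.Theory Num.Theory.
Import numFieldNormedType.Exports.
Local Open Scope classical_set_scope.
Local Open Scope ring_scope.

(* An adaptive policy over N steps: at step k, given the k previously
   realized points (as a k-tuple, in generation order), it chooses a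
   probability distribution on R (Borel sets). *)
Definition policy (R : realType) := forall k : nat, k.-tuple R -> probability R R.

Definition unif01 (R : realType) (A : set R) : \bar R :=
  (@lebesgue_measure R) (A `&` `[0%R, 1%R]).

(* sigma-smooth distribution on [0,1]: mu(A) <= U(A)/sigma for all measurable A
   (this forces mu to be supported on [0,1]). *)
Definition smooth (R : realType) (sigma : R) (mu : probability R R) : Prop :=
  forall A : set R, measurable A -> (mu A <= (sigma^-1)%:E * unif01 A)%E.

(* A policy is an N-step adaptive sequence of sigma-smooth distributions:
   every chosen distribution is sigma-smooth, and the choice depends
   measurably on the history (i.e. each step is a Markov kernel). *)
Definition adaptive_smooth (R : realType) (sigma : R) (N : nat) (P : policy R) : Prop :=
  (forall k (h : k.-tuple R), (k < N)%N -> smooth sigma (P k h)) /\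
  (forall k (A : set R), (k < N)%N -> measurable A ->
      measurable_fun [set: k.-tuple R] (fun h => P k h A)).

(* Iterated integral: starting from history h (length k), draw n more points
   adaptively according to P and integrate f over the full realized sequence. *)
Fixpoint adapt_int (R : realType) (P : policy R) (n : nat)
    (f : seq R -> \bar R) (k : nat) (h : k.-tuple R) {struct n} : \bar R :=
  match n with
  | 0 => f h
  | n'.+1 => (\int[P k h]_x adapt_int P n' f [tuple of rcons h x])%E
  end.

Definition adapt_prob (R : realType) (P : policy R) (N : nat) (E : set (seq R)) : \bar R :=
  adapt_int P N (fun s => (\1_E s)%:E) [tuple].

Definition count_in (R : realType) (J : interval R) (s : seq R) : nat :=
  count (fun x => x \in J) s.

Definition small_interval (R : realType) (w : R) (J : interval R) : Prop :=
  [set` J] `<=` `[0%R, 1%R] /\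
  (forall x y, x \in J -> y \in J -> `|x - y| <= w).

(* Main.v *)
Require Import Defs.
From HB Require Import structures.
From mathcomp Require Import all_boot all_order all_algebra.
From mathcomp Require Import all_classical all_reals all_analysis measurable_realfun.
From mathcomp Require Import ring lra.
Import Order.TTheory GRing.Theory Num.Theory.
Import numFieldNormedType.Exports.
Local Open Scope classical_set_scope.
Local Open Scope ring_scope.
Set Implicit Arguments. Unset Strict Implicit. Unset Printing Implicit Defensive.

Lemma le_integral_nm d (T : measurableType d) (R : realType) (mu : {measure set T -> \bar R})
  (f g : T -> \bar R) : (forall x, 0 <= f x)%E -> (forall x, f x <= g x)%E ->
  (\int[mu]_x f x <= \int[mu]_x g x)%E.
Proof.
move=> f0 fg.
have g0 : forall x, (0 <= g x)%E by move=> x; exact: le_trans (f0 x) (fg x).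
rewrite !ge0_integralTE //.
apply: ereal_sup_le => _ [h hf <-]; exists h => //= x; exact: le_trans (hf x) (fg x).
Qed.

Lemma adapt_int_ge0 (R : realType) (P : policy R) n (f : seq R -> \bar R) :
  (forall s, 0 <= f s)%E -> forall k (h : k.-tuple R), (0 <= adapt_int P n f h)%E.
Proof.
move=> f0; elim: n => [|n IH] k h /=; first exact: f0.
by apply: integral_ge0 => x _; apply: IH.
Qed.

Definition cnt (R : realType) (I : nat -> set R) k (s : seq R) : nat :=
  count (fun x => x \in I k) s.

Definition Vpot (R : realType) (I : nat -> set R) (K : nat) (u p : R) n (s : seq R) : R :=
  (1 + u * p) ^+ n * \sum_(k < K) (1 + u) ^+ cnt I k s.
Lemma cover (R : realType) (w g : R) (J : interval R) : 0 < g -> small_interval w J ->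
  exists k, (k < (Num.truncn (1 / g)).+1)%N /\
    forall x, x \in J -> k%:R * g <= x <= k%:R * g + (g + w).
Proof.
move=> g0 [sub wJ].
case: (pselect (exists x, x \in J)) => [[x0 Jx0]|nJ]; last first.
  by exists 0%N; split => // x Jx; exfalso; apply: nJ; exists x.
have w0 : 0 <= w by have := wJ x0 x0 Jx0 Jx0; rewrite subrr normr0.
set E := [set` J].
have EJ x : E x -> x \in J by [].
have JE x : x \in J -> E x by [].
have in01 x : x \in J -> 0 <= x <= 1.
  by move=> /JE /sub; rewrite /= in_itv.
have Elb : lbound E 0 by move=> y /EJ /in01 /andP[].
have hlb : has_lbound E by exists 0.
have nE : E !=set0 by exists x0.
have hinf : has_inf E by split.
set m := inf E.
have m0 : 0 <= m by apply: lb_le_inf.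
have mx x : x \in J -> m <= x by move=> /JE; exact: ge_inf.
have m1 : m <= 1 by apply: le_trans (mx _ Jx0) _; case/andP: (in01 _ Jx0).
have mw x : x \in J -> x <= m + w.
  move=> Jx; rewrite leNgt; apply/negP => hx.
  have e0 : 0 < x - w - m by lra.
  have [y Ey ylt] := inf_adherent e0 hinf.
  have := wJ x y Jx (EJ _ Ey).
  rewrite ger0_norm; lra.
have mg0 : 0 <= m / g by apply: divr_ge0 => //; exact: ltW.
have := truncn_itv mg0; set k := Num.truncn (m / g); move=> /andP[k1 k2].
exists k; split.
  rewrite ltnS; apply: le_truncn; apply: ler_wpM2r => //.
  by rewrite invr_ge0 ltW.
have kg1 : k%:R * g <= m by rewrite -ler_pdivlMr.
have kg2 : m < k%:R * g + g.
  by move: k2; rewrite ltr_pdivrMr // -natr1 mulrDl mul1r.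
move=> x Jx; have := mx _ Jx; have := mw _ Jx => h1 h2.
apply/andP; split; lra.
Qed.
Definition Bnd (R : realType) (N : nat) (sigma w delta : R) : R :=
  N%:R * w / sigma * ln (2 * N%:R / delta)
  + 10 * Num.sqrt (N%:R * w / sigma * ln (2 * N%:R / delta) * ln (1 / delta))
  + 10 * ln (10 * N%:R * ln (2 * N%:R / delta) / (sigma * delta)).

Lemma ln_ge1 (R : realType) (x : R) : 0 < x -> 1 - x^-1 <= ln x.
Proof.
move=> x0.
have xi : 0 < x^-1 by rewrite invr_gt0.
have h : -1 < x^-1 - 1 by lra.
have := le_ln1Dx h; rewrite addrC subrK lnV ?posrE //; lra.
Qed.

Lemma real_bound (R : realType) (N : nat) (sigma w delta : R) :
  (4 <= N)%N -> 0 < sigma -> sigma <= 1 -> 0 < w -> 0 < delta -> delta < 1 ->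
  forall g p K M, g = w / 100 + sigma / N%:R ->
  p = (g + w) / sigma ->
  K = (Num.truncn (1 / g)).+1 ->
  M = (1 + 8^-1 * p) ^+ N * K%:R / delta ->
  ln M / ln (1 + 8^-1) <= Bnd N sigma w delta.
Proof.
move=> N4 s0 s1 w0 d0 d1 g p K M hg hp hK hM.
rewrite /Bnd.
set Nr := N%:R.
have Nr4 : 4 <= Nr by rewrite /Nr (ler_nat R 4 N).
have N0 : 0 < Nr by lra.
have sN : 0 < sigma / Nr by apply: divr_gt0.
have w100 : 0 < w / 100 by apply: divr_gt0.
have g0 : 0 < g by rewrite hg; lra.
have p0 : 0 <= p by rewrite hp; apply: divr_ge0; lra.
have Ns1 : 1 <= Nr / sigma by rewrite ler_pdivlMr // mul1r; lra.
have ig : 1 / g <= Nr / sigma.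
  rewrite ler_pdivrMr //.
  have e : Nr / sigma * (sigma / Nr) = 1 by field; apply/andP; split; apply: lt0r_neq0.
  rewrite -[leLHS]e; apply: ler_wpM2l; first lra.
  rewrite hg; lra.
have Kle : K%:R <= 2 * (Nr / sigma).
  rewrite hK -natr1.
  have : (Num.truncn (1 / g))%:R <= 1 / g by rewrite truncn_le divr_ge0 // ltW.
  lra.
have K1 : 1 <= K%:R :> R by rewrite hK ler1n.
set c := 1 + 8^-1 * p.
have c1 : 1 <= c by rewrite /c lerDl mulr_ge0.
have cN : 0 < c ^+ N by apply: exprn_gt0; lra.
have Kd : 0 < K%:R / delta by apply: divr_gt0 => //; lra.
have lnM_eq : ln M = Nr * ln c + ln (K%:R / delta).
  rewrite hM -/c -mulrA lnM ?posrE // lnXn ?mulr_natl //; lra.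
have lnc : ln c <= 8^-1 * p.
  apply: le_ln1Dx; have : 0 <= 8^-1 * p by apply: mulr_ge0.
  lra.
set mu := Nr * w / sigma.
have mu0 : 0 <= mu by apply: divr_ge0; [apply: mulr_ge0; lra | lra].
have Np : Nr * p = mu / 100 + 1 + mu.
  rewrite hp hg /mu; field; apply/andP; split; apply: lt0r_neq0 => //.
set X := 2 * Nr / (sigma * delta).
have KX : ln (K%:R / delta) <= ln X.
  rewrite ler_ln ?posrE //; last first.
    by apply: divr_gt0; [lra | apply: mulr_gt0].
  rewrite /X invfM mulrA ler_pM2r ?invr_gt0 //.
  by rewrite -mulrA.
have X1 : 1 <= X.
  rewrite /X ler_pdivlMr ?mulr_gt0 // mul1r.
  have : sigma * delta <= 1 * 1 by apply: ler_pM; lra.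
  lra.
have lnX0 : 0 <= ln X by apply: ln_ge0.
have lnc0 : 0 <= ln c by apply: ln_ge0.
have Kd1 : 0 <= ln (K%:R / delta).
  apply: ln_ge0; rewrite ler_pdivlMr // mul1r; lra.
have Nlnc0 : 0 <= Nr * ln c by apply: mulr_ge0; lra.
have lnM0 : 0 <= ln M by rewrite lnM_eq; lra.
have Nlnc : Nr * ln c <= 8^-1 * (Nr * p).
  by rewrite mulrCA; apply: ler_wpM2l; lra.
have lnq : 9^-1 <= ln (1 + 8^-1 : R).
  have e : (1 + 8^-1 : R)^-1 = 1 - 9^-1 by field.
  have := ln_ge1 (x := 1 + 8^-1 : R) (ltac:(lra)); rewrite e; lra.
have lnq0 : 0 < ln (1 + 8^-1 : R) by apply: lt_le_trans lnq; rewrite invr_gt0.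
have H9 : ln M / ln (1 + 8^-1) <= 9 * ln M.
  rewrite ler_pdivrMr //.
  have : 9 * ln M * 9^-1 <= 9 * ln M * ln (1 + 8^-1) by apply: ler_wpM2l => //; lra.
  have e : 9 * ln M * 9^-1 = ln M by field.
  lra.
set L := ln (2 * Nr / delta).
have L32 : 3 / 2 <= L.
  have l8 : 3 / 2 <= ln (8 : R).
    rewrite (_ : (8:R) = 2 ^+ 3); last by rewrite !exprS expr0; lra.
    rewrite lnXn // -mulr_natr.
    have := ln_ge1 (x := 2 : R) (ltac:(lra)).
    lra.
  have : ln (8 : R) <= L.
    rewrite /L ler_ln ?posrE //; last by apply: divr_gt0; lra.
    rewrite ler_pdivlMr //.
    have : 2 * Nr * delta <= 2 * Nr * 1 by apply: ler_wpM2l; lra.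
    lra.
  lra.
have muL : 3 / 2 * mu <= mu * L by rewrite mulrC; apply: ler_wpM2l.
set Lc := ln (10 * Nr * L / (sigma * delta)).
have Lc_eq : Lc = ln (5 * L) + ln X.
  rewrite /Lc -lnM ?posrE; last 2 first.
  - lra.
  - by apply: divr_gt0; [lra | apply: mulr_gt0].
  congr ln; rewrite /X; field; apply/andP; split; apply: lt0r_neq0 => //.
have l5 : 13 / 15 <= ln (5 * L).
  have := ln_ge1 (x := 5 * L) (ltac:(lra)).
  have : (5 * L)^-1 <= 2 / 15.
    rewrite -[leLHS]mul1r ler_pdivrMr; last lra.
    lra.
  lra.
have sq := sqrtr_ge0 (mu * L * ln (1 / delta)).
rewrite lnM_eq in H9 *.
lra.
Qed.

Lemma Bnd_gt3 (R : realType) (N : nat) (sigma w delta : R) :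
  (1 <= N)%N -> 0 < sigma -> sigma <= 1 -> 0 < w -> 0 < delta -> delta < 1 ->
  3 < Bnd N sigma w delta.
Proof.
move=> N1 s0 s1 w0 d0 d1; rewrite /Bnd.
set Nr := N%:R.
have Nr1 : 1 <= Nr by rewrite /Nr (ler_nat R 1 N).
set mu := Nr * w / sigma.
have mu0 : 0 <= mu by apply: divr_ge0; [apply: mulr_ge0; lra | lra].
set L := ln (2 * Nr / delta).
have L12 : 1 / 2 <= L.
  have l2 : 1 / 2 <= ln (2 : R) by have := ln_ge1 (x := 2 : R) (ltac:(lra)); lra.
  have : ln (2 : R) <= L.
    rewrite /L ler_ln ?posrE //; last by apply: divr_gt0; lra.
    rewrite ler_pdivlMr //.
    have : 2 * Nr * delta <= 2 * Nr * 1 by apply: ler_wpM2l; lra.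
    lra.
  lra.
have muL : 0 <= mu * L by apply: mulr_ge0; lra.
set X := 2 * Nr / (sigma * delta).
have X1 : 1 <= X.
  rewrite /X ler_pdivlMr ?mulr_gt0 // mul1r.
  have : sigma * delta <= 1 * 1 by apply: ler_pM; lra.
  lra.
have lnX0 : 0 <= ln X by apply: ln_ge0.
set Lc := ln (10 * Nr * L / (sigma * delta)).
have Lc_eq : Lc = ln (5 * L) + ln X.
  rewrite /Lc -lnM ?posrE; last 2 first.
  - lra.
  - by apply: divr_gt0; [lra | apply: mulr_gt0].
  congr ln; rewrite /X; field; apply/andP; split; apply: lt0r_neq0 => //.
have l5 : 3 / 5 <= ln (5 * L).
  have := ln_ge1 (x := 5 * L) (ltac:(lra)).
  have : (5 * L)^-1 <= 2 / 5.
    rewrite -[leLHS]mul1r ler_pdivrMr; last lra.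
    lra.
  lra.
have sq := sqrtr_ge0 (mu * L * ln (1 / delta)).
lra.
Qed.
Section Key.
Context (R : realType) (P : policy R) (N K : nat) (I : nat -> set R).
Hypothesis mI : forall k, measurable (I k).
Variables (u p M : R).
Hypotheses (u0 : 0 <= u) (p0 : 0 <= p) (M0 : 0 < M).
Hypothesis PI : forall k0 (h : k0.-tuple R) k, (k0 < N)%N -> (@P k0 h (I k) <= p%:E)%E.
Variable G : set (seq R).
Hypothesis base : forall s, size s = N ->
  (forall k, (k < K)%N -> (1 + u) ^+ cnt I k s < M) -> G s.

Lemma Vpot_ge0 n s : 0 <= Vpot I K u p n s.
Proof.
rewrite /Vpot; apply: mulr_ge0; first by apply: exprn_ge0; rewrite addr_ge0 // mulr_ge0.
by apply: sumr_ge0 => k _; apply: exprn_ge0; rewrite addr_ge0.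
Qed.

Lemma cnt_rcons k (h : seq R) x : cnt I k (rcons h x) = (cnt I k h + (x \in I k))%N.
Proof. by rewrite /cnt -cats1 count_cat /= addn0. Qed.

Lemma Vpot_rcons n (h : seq R) x : Vpot I K u p n (rcons h x) / M =
  \sum_(k < K) ((1 + u * p) ^+ n * (1 + u) ^+ cnt I k h / M * (1 + u * \1_(I k) x)).
Proof.
rewrite /Vpot big_distrr /= mulr_suml; apply: eq_bigr => k _.
rewrite cnt_rcons exprD indicE; case: (x \in I k) => /=.
  by rewrite expr1 mulr1; field; rewrite gt_eqF.
by rewrite expr0 mulr0 addr0 !mulr1.
Qed.

Lemma meas_W n (h : seq R) :
  measurable_fun setT (fun x => Vpot I K u p n (rcons h x) / M).
Proof.
under eq_fun do rewrite Vpot_rcons.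
apply: measurable_sum => k; apply: measurable_funM => //.
by apply: measurable_funD => //; apply: measurable_funM.
Qed.

Lemma int_W n k0 (h : k0.-tuple R) : (k0 < N)%N ->
  (\int[@P k0 h]_x (Vpot I K u p n (rcons h x) / M)%:E <= (Vpot I K u p n.+1 h / M)%:E)%E.
Proof.
move=> k0N.
under eq_integral do rewrite Vpot_rcons -sumEFin.
rewrite ge0_integral_sum //; last first.
- move=> k x _ /=; rewrite lee_fin; apply: mulr_ge0.
    apply: divr_ge0; last exact: ltW.
    by apply: mulr_ge0; apply: exprn_ge0; rewrite ?addr_ge0 ?mulr_ge0.
  by rewrite addr_ge0 // mulr_ge0 // indicE ler0n.
- move=> k; apply/measurable_EFinP; apply: measurable_funM => //.
  apply: measurable_funD => //; apply: measurable_funM => //.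
  try exact: measurable_indic.
have -> : Vpot I K u p n.+1 h / M =
   \sum_(k < K) ((1 + u * p) ^+ n * (1 + u) ^+ cnt I k h / M * (1 + u * p)).
  rewrite /Vpot big_distrr /= mulr_suml; apply: eq_bigr => k _.
  by rewrite exprS; field; rewrite gt_eqF.
rewrite -sumEFin; apply: lee_sum => k _.
set a := _ / M.
have a0 : 0 <= a.
  apply: divr_ge0; last exact: ltW.
  by apply: mulr_ge0; apply: exprn_ge0; rewrite ?addr_ge0 ?mulr_ge0.
have E x : (a * (1 + u * \1_(I k) x))%:E = (a%:E + (a * u)%:E * (\1_(I k) x)%:E)%E.
  by rewrite -EFinM -EFinD mulrDr mulr1 mulrA.
under eq_integral do rewrite E.
rewrite ge0_integralD //; last first.
- apply/measurable_EFinP; apply: measurable_funM => //; exact: measurable_indic.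
- move=> x _; rewrite -EFinM lee_fin; apply: mulr_ge0; [exact: mulr_ge0 | by rewrite indicE ler0n].
have -> : (\int[@P k0 h]_x a%:E = a%:E)%E.
  rewrite -[LHS]/(\int[@P k0 h]_x (cst a%:E) x)%E integral_cst //.
  by rewrite [X in (_ * X)%E](_ : _ = 1%E) ?mule1 //; exact: probability_setT.
rewrite ge0_integralZl_EFin //; last 2 first.
- by apply/measurable_EFinP; exact: measurable_indic.
- exact: mulr_ge0.
rewrite integral_indic // setIT mulrDr mulr1 EFinD; apply: leeD2l.
rewrite mulrA [(a * u * p)%:E]EFinM; apply: lee_wpmul2l; first by rewrite lee_fin mulr_ge0.
exact: PI.
Qed.

Lemma key n : forall k0 (h : k0.-tuple R), (k0 + n = N)%N ->
  ((1 - Vpot I K u p n h / M)%:E <= adapt_int P n (fun s => (\1_G s)%:E) h)%E.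
Proof.
elim: n => [|n IH] k0 h Hk.
  rewrite addn0 in Hk; rewrite /= lee_fin indicE.
  case: (pselect (G h)) => Gh.
    rewrite mem_set //= lerBlDr lerDl; apply: divr_ge0; [exact: Vpot_ge0 | exact: ltW].
  rewrite memNset //= subr_le0 ler_pdivlMr // mul1r.
  have : ~ (forall k, (k < K)%N -> (1 + u) ^+ cnt I k h < M).
    by move=> H; apply: Gh; apply: base => //; rewrite size_tuple.
  move/existsNP => [k /not_implyP [kK /negP]]; rewrite -leNgt => Mk.
  rewrite /Vpot expr0 mul1r (bigD1 (Ordinal kK)) //= (le_trans Mk) // lerDl.
  by apply: sumr_ge0 => i _; apply: exprn_ge0; rewrite addr_ge0.
have k0N : (k0 < N)%N by rewrite -Hk addnS ltnS leq_addr.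
rewrite /=.
set f := fun s => (\1_G s)%:E.
set W := fun x => Vpot I K u p n (rcons h x) / M.
have W0 x : 0 <= W x by apply: divr_ge0; [exact: Vpot_ge0 | exact: ltW].
have H1 x : ((Num.max 0 (1 - W x))%:E <= adapt_int P n f [tuple of rcons h x])%E.
  have Hk' : (k0.+1 + n = N)%N by rewrite addSnnS.
  have := IH k0.+1 [tuple of rcons h x] Hk'.
  have f0 : forall s, (0 <= f s)%E by move=> s; rewrite /f lee_fin indicE ler0n.
  have := adapt_int_ge0 P n f0 [tuple of rcons h x].
  move=> g0 g1; case: (leP 0 (1 - W x)) => _ //.
have Hm : measurable_fun setT (fun x => Num.max 0 (1 - W x)).
  apply: measurable_maxr => //; apply: measurable_funB => //; exact: meas_W.
have mx0 x : (0 <= (Num.max 0 (1 - W x))%:E)%E by rewrite lee_fin le_max lexx.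
have HI := le_integral_nm (@P k0 h) mx0 H1.
apply: le_trans HI.
have HB := int_W n h k0N.
have mW : measurable_fun setT (fun x => (W x)%:E).
  by apply/measurable_EFinP; exact: meas_W.
have H2 : (1 <= \int[@P k0 h]_x (Num.max 0 (1 - W x))%:E + \int[@P k0 h]_x (W x)%:E)%E.
  rewrite -ge0_integralD //; last 2 first.
  - by apply/measurable_EFinP.
  - by move=> x _; rewrite lee_fin.
  have c0 : forall x : R, (0 <= cst 1%E x)%E by move=> x; rewrite /= lee01.
  apply: (@le_trans _ _ (\int[@P k0 h]_x cst 1%E x)%E).
    rewrite integral_cst //= mul1e.
    by rewrite [X in (_ <= X)%E](_ : _ = 1%E) //; exact: probability_setT.
  apply: le_integral_nm => // x /=.
  rewrite -EFinD lee_fin.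
  have h1 : 1 - W x <= Num.max 0 (1 - W x) by rewrite le_max lexx orbT.
  lra.
rewrite EFinB leeBlDr //; apply: le_trans H2 _; exact: leeD2l.
Qed.

End Key.

Unset Implicit Arguments.

Theorem mainTheorem8 (R : realType) (T l : nat) (sigma w delta : R)
  (P : policy R) :
  (0 < T)%N -> (0 < l)%N ->
  0 < sigma -> sigma <= 1 ->
  0 < w -> w <= 1 ->
  0 < delta -> delta < 1 ->
  adaptive_smooth sigma (T * l) P ->
  ((1 - delta)%:E <=
   adapt_prob P (T * l)
     [set s | forall J : interval R, small_interval w J ->
        (((count_in J s)%:R : R) <
          (T * l)%:R * w / sigma * ln (2 * (T * l)%:R / delta)
          + 10 * Num.sqrt ((T * l)%:R * w / sigma * ln (2 * (T * l)%:R / delta)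
                           * ln (1 / delta))
          + 10 * ln (10 * (T * l)%:R * ln (2 * (T * l)%:R / delta)
                     / (sigma * delta)))%R])%E.
Proof.
move=> T0 l0 s0 s1 w0 w1 d0 d1 [Hsm _].
set N := (T * l)%N.
have N1 : (1 <= N)%N by rewrite /N muln_gt0 T0 l0.
set G := [set s | _].
have hG : G = [set s | forall J : interval R, small_interval w J ->
                ((count_in J s)%:R : R) < Bnd N sigma w delta] by [].
have NR : 0 < N%:R :> R by rewrite ltr0n.
pose g := w / 100 + sigma / N%:R.
have g0 : 0 < g by rewrite /g; apply: addr_gt0; apply: divr_gt0.
pose p := (g + w) / sigma.
have p0 : 0 <= p by apply: divr_ge0; apply: ltW => //; apply: addr_gt0.
pose K := (Num.truncn (1 / g)).+1.
pose u : R := 8^-1.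
have u0 : 0 <= u by rewrite /u invr_ge0.
pose c := 1 + u * p.
have c1 : 1 <= c by rewrite /c lerDl mulr_ge0.
pose M := c ^+ N * K%:R / delta.
have cN : 0 < c ^+ N by apply: exprn_gt0; apply: lt_le_trans c1.
have KR : 0 < K%:R :> R by rewrite ltr0n.
have M0 : 0 < M by rewrite /M; apply: divr_gt0 => //; apply: mulr_gt0.
pose I k : set R := [set` `[k%:R * g, k%:R * g + (g + w)]].
have mI k : measurable (I k) by exact: measurable_itv.
have PI : forall k0 (h : k0.-tuple R) k, (k0 < N)%N -> (P k0 h (I k) <= p%:E)%E.
  move=> k0 h k k0N.
  apply: le_trans (Hsm k0 h k0N (I k) (mI k)) _.
  rewrite /unif01 /p mulrC EFinM; apply: lee_wpmul2l.
    by rewrite lee_fin invr_ge0 ltW.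
  apply: le_trans (measureIl _ _ _) _; rewrite /I.
  all: try exact: measurable_itv.
  apply: (@le_trans _ _ (lebesgue_measure ([set` `[k%:R * g, k%:R * g + (g + w)]] : set R))).
    exact: lexx.
  rewrite lebesgue_measure_itv /= lte_fin ltrDl addr_gt0 //= EFinD.
  by rewrite -EFinB addrAC subrr add0r.
have base : forall s, size s = N ->
    (forall k, (k < K)%N -> (1 + u) ^+ cnt I k s < M) -> G s.
  move=> s sz H; rewrite hG /= => J hJ.
  have [N3|N4] := leqP N 3.
    apply: (le_lt_trans _ (Bnd_gt3 N1 s0 s1 w0 d0 d1)).
    rewrite (ler_nat R _ 3) /count_in; apply: leq_trans N3.
    by rewrite -sz count_size.
  have [k [kK hk]] := cover g0 hJ.
  have cJ : (count_in J s <= cnt I k s)%N.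
    by apply: sub_count => x /hk Ix; rewrite /I inE /= in_itv /=.
  have Hk := H k kK.
  have q1 : 1 < 1 + u by rewrite ltrDl /u invr_gt0.
  have lq : 0 < ln (1 + u) by apply: ln_gt0.
  have lnlt : (cnt I k s)%:R < ln M / ln (1 + u).
    rewrite ltr_pdivlMr //.
    move: Hk; rewrite -ltr_ln ?posrE ?exprn_gt0 //; last by apply: lt_trans q1.
    by rewrite lnXn ?mulr_natl //; apply: lt_trans q1.
  apply: le_lt_trans (_ : _ <= (cnt I k s)%:R) _; first by rewrite ler_nat.
  apply: lt_le_trans lnlt _.
  exact: (real_bound N4 s0 s1 w0 d0 d1 (erefl g) (erefl p) (erefl K) (erefl M)).
have := @key R P N K I mI u p M u0 p0 M0 PI G base N 0 [tuple] (add0n N).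
rewrite /adapt_prob; apply: le_trans; rewrite lee_fin.
have -> : Vpot I K u p N [tuple] = c ^+ N * K%:R.
  rewrite /Vpot (eq_bigr (fun=> 1)) ?sumr_const ?card_ord //.
have E : c ^+ N * K%:R / M = delta.
  by rewrite /M; field; rewrite !gt_eqF.
by rewrite E.
Qed.
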